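(* Let $(\mathscr{M},g)$ be a smooth complete Riemannian manifold, $x_0\in\mathscr M$, $r>0$, and $u\in C(\overline B_r(x_0))$. Suppose $u(y_0)=l$ for some $y_0\in\overline B_{r/2}(x_0)$, that $u\ge t$ on $\overline B_r(x_0)\setminus B_{5r/6}(x_0)$, and that $l<t$. Then for every $a\ge0$, \[ A\big(a,\overline B_{r/6}(y_0)/B_r(x_0),u\big)\subset B_{5r/6}(x_0)\cap\Big\{u\le l+\frac{ar^2}{36}\Big\}. \]
   Context: $\rho$ is the Riemannian distance and $B_s(z)$ the geodesic ball. For a domain $\Omega$, $u\in C(\overline\Omega)$, $a\ge0$ and compact $E$, $A(a,E/\Omega,u)$ is the set of $x\in\overline\Omega$ such that for some $y\in E$, $\inf_{\overline\Omega}\{u+\frac a2\rho^2(\cdot,y)\}=u(x)+\frac a2\rho^2(x,y)$. *)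

(* Defs.v *)
From Stdlib Require Import Reals.
Open Scope R_scope.

Record MetricSpace := {
  carrier :> Type;
  rho : carrier -> carrier -> R;
  rho_nonneg : forall x y, 0 <= rho x y;
  rho_eq0 : forall x y, rho x y = 0 <-> x = y;
  rho_sym : forall x y, rho x y = rho y x;
  rho_triangle : forall x y z, rho x z <= rho x y + rho y z
}.

Arguments rho {m} _ _.

Section Defs.
Variable M : MetricSpace.

Definition ball (z : M) (s : R) : M -> Prop := fun x => rho x z < s.
Definition cball (z : M) (s : R) : M -> Prop := fun x => rho x z <= s.

Definition closure (S : M -> Prop) : M -> Prop :=
  fun x => forall eps, 0 < eps -> exists z, S z /\ rho x z < eps.

Definition continuous_on (D : M -> Prop) (u : M -> R) : Prop :=
  forall x, D x -> forall eps, 0 < eps -> exists delta, 0 < delta /\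
    forall z, D z -> rho z x < delta -> Rabs (u z - u x) < eps.

Definition Aset (a : R) (E Omega : M -> Prop) (u : M -> R) : M -> Prop :=
  fun x => closure Omega x /\
    exists y, E y /\
      forall z, closure Omega z ->
        u x + a / 2 * (rho x y) ^ 2 <= u z + a / 2 * (rho z y) ^ 2.
End Defs.

Arguments ball {M} _ _.
Arguments cball {M} _ _.
Arguments closure {M} _.
Arguments continuous_on {M} _ _.
Arguments Aset {M} _ _ _ _.

(* Main.v *)
Require Import Defs.
From Stdlib Require Import Reals Lra.
Open Scope R_scope.

Lemma closure_ball_le (M : MetricSpace) (x0 x : M) (r : R) :
  closure (ball x0 r) x -> rho x x0 <= r.
Proof.
  intros H. destruct (Rle_dec (rho x x0) r) as [h|h]; [exact h|].
  destruct (H (rho x x0 - r)) as [z [Hz Hxz]]; [lra|].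
  unfold ball in Hz. pose proof (rho_triangle M x z x0). lra.
Qed.

Theorem lemma3p3 (M : MetricSpace) (x0 y0 : M) (r l t : R) (u : M -> R) :
  0 < r ->
  continuous_on (cball x0 r) u ->
  cball x0 (r / 2) y0 ->
  u y0 = l ->
  (forall x, cball x0 r x -> ~ ball x0 (5 * r / 6) x -> t <= u x) ->
  l < t ->
  forall a : R, 0 <= a ->
  forall x, Aset a (cball y0 (r / 6)) (ball x0 r) u x ->
    ball x0 (5 * r / 6) x /\ u x <= l + a * r ^ 2 / 36.
Proof.
  intros hr _ Hy0 Hl Ht Hlt a ha x [Hcx [y [Hy Hmin]]].
  unfold cball in Hy0, Hy.
  assert (Hx : rho x x0 <= r) by (apply (closure_ball_le M); exact Hcx).
  assert (Hc0 : closure (ball x0 r) y0).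
  { intros eps he. exists y0. split.
    - unfold ball. lra.
    - rewrite (proj2 (rho_eq0 M y0 y0) eq_refl). exact he. }
  specialize (Hmin y0 Hc0).
  pose proof (rho_nonneg M y0 y) as n1.
  pose proof (rho_nonneg M x y) as n2.
  assert (Hsq : rho y0 y ^ 2 <= (r/6)^2).
  { rewrite (rho_sym M y0 y). pose proof (rho_nonneg M y y0).
    apply pow_incr; lra. }
  assert (Hu : u x <= l + a * r ^ 2 / 72).
  { assert (0 <= a/2 * rho x y ^ 2).
    { apply Rmult_le_pos; [lra| apply pow_le; lra]. }
    assert (a/2 * rho y0 y ^ 2 <= a/2 * (r/6)^2).
    { apply Rmult_le_compat_l; lra. }
    assert (a/2*(r/6)^2 = a * r^2/72) by field. lra. }
  split.
  - destruct (Rlt_dec (rho x x0) (5*r/6)) as [h|h]; [exact h|exfalso].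
    assert (Htx : t <= u x) by (apply Ht; [unfold cball; lra | exact h]).
    pose proof (rho_triangle M x y x0).
    pose proof (rho_triangle M y y0 x0).
    apply Rnot_lt_le in h.
    assert (Hd : r/6 <= rho x y) by lra.
    assert ((r/6)^2 <= rho x y ^2) by (apply pow_incr; lra).
    assert (a/2 * (r/6)^2 <= a/2 * rho x y ^ 2) by (apply Rmult_le_compat_l; lra).
    assert (a/2 * rho y0 y ^ 2 <= a/2 * (r/6)^2) by (apply Rmult_le_compat_l; lra).
    lra.
  - assert (0 <= a * r^2) by (apply Rmult_le_pos; [lra| apply pow_le; lra]). lra.
Qed.
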